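(* Let $G$ be a 2-step nilpotent (connected, simply connected) Lie group with Lie algebra $\mathfrak{g}=\mathfrak{v}\oplus\mathfrak{z}$, where $\mathfrak{z}$ is the center, and let $\langle\cdot,\cdot\rangle$ be an inner product on $\mathfrak{v}$. Suppose that $J_\eta$ has rank $2$ for all $\eta\in\mathfrak{z}^*\setminus\{0\}$. Then $G$ satisfies Assumption (A) with the sublaplacian $L$ associated with $\langle\cdot,\cdot\rangle$, and also with any other sublaplacian associated with an inner product on any linear complement of $\mathfrak{z}$. Moreover, let $G_\mathbb{C}$ be the complexification of $G$, regarded as a real 2-step group with Lie algebra $\mathfrak{g}_\mathbb{C}=\mathfrak{v}_\mathbb{C}\oplus\mathfrak{z}_\mathbb{C}$, and endow $\mathfrak{v}_\mathbb{C}=\mathfrak{v}\oplus i\mathfrak{v}$ with the real inner product induced by $\langle\cdot,\cdot\rangle$ (i.e. $\langle x_R+ix_I,x'_R+ix'_I\rangle=\langle x_R,x'_R\rangle+\langle x_I,x_I'\rangle$). Then $G_\mathbb{C}$ with the associated sublaplacian satisfies Assumption (A).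
   Context: For a 2-step group with Lie algebra $\mathfrak{g}=\mathfrak{v}\oplus\mathfrak{z}$ ($\mathfrak{z}$ the center, $\mathfrak{v}$ a complement) and an inner product $\langle\cdot,\cdot\rangle$ on $\mathfrak{v}$, the associated sublaplacian is $L=-\sum_jX_j^2$ with $\{X_j\}$ an orthonormal basis of $\mathfrak{v}$, and for $\eta\in\mathfrak{z}^*$, $J_\eta$ is the skew-adjoint endomorphism of $\mathfrak{v}$ with $\eta([x,x'])=\langle J_\eta x,x'\rangle$ for all $x,x'\in\mathfrak{v}$. Assumption (A) for $(G,L)$: there exist integers $r_1,\dots,r_k>0$ and an orthogonal decomposition $\mathfrak{v}=\mathfrak{v}_1\oplus\dots\oplus\mathfrak{v}_k$ with orthogonal projections $P_j$ such that for all $\eta\in\mathfrak{z}^*\setminus\{0\}$ and all $j$, $J_\eta P_j=P_jJ_\eta$ and $J_\eta^2P_j$ has rank $2r_j$ and a unique nonzero eigenvalue. *)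

(* Defs.v *)
From HB Require Import structures.
From mathcomp Require Import all_boot all_order all_algebra.
From mathcomp Require Import reals.
Set Implicit Arguments. Unset Strict Implicit. Unset Printing Implicit Defensive.
Import Order.TTheory GRing.Theory Num.Theory.
Local Open Scope ring_scope.

Section Defs.
Variable R : realType.

Definition two_step_bracket (N : nat) (br : 'rV[R]_N -> 'rV[R]_N -> 'rV[R]_N) :=
  [/\ (forall (a : R) x y w, br (a *: x + y) w = a *: br x w + br y w),
      (forall (a : R) x y w, br w (a *: x + y) = a *: br w x + br w y),
      (forall x, br x x = 0),
      (forall x y w, br (br x y) w = 0) &
      (exists x y, br x y != 0)].

Definition central (N : nat) (br : 'rV[R]_N -> 'rV[R]_N -> 'rV[R]_N) (y : 'rV[R]_N) :=
  forall w, br y w = 0.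

(* A complement v of z together with an inner product on v is encoded by an
   orthonormal basis of v: the rows X_1..X_n of X.  [complement br X] says the
   rows of X are linearly independent, their span meets z trivially and
   span + z = g. *)
Definition complement (N n : nat) (br : 'rV[R]_N -> 'rV[R]_N -> 'rV[R]_N)
  (X : 'M[R]_(n, N)) :=
  (forall a : 'rV[R]_n, central br (a *m X) -> a = 0) /\
  (forall w : 'rV[R]_N, exists a : 'rV[R]_n, central br (w - a *m X)).

(* linear functionals on g; eta ∈ z^* is represented by (the restriction to z
   of) a functional e on g. *)
Definition eta (N : nat) (e : 'rV[R]_N) (y : 'rV[R]_N) : R := (y *m e^T) 0 0.

Definition nonzero_on_center (N : nat) (br : 'rV[R]_N -> 'rV[R]_N -> 'rV[R]_N)
  (e : 'rV[R]_N) := exists y, central br y /\ eta e y != 0.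

(* Matrix of J_eta in the orthonormal basis X (acting on coordinate row vectors
   x |-> x *m J): <x J, x'> = eta([x, x']). *)
Definition Jmx (N n : nat) (br : 'rV[R]_N -> 'rV[R]_N -> 'rV[R]_N)
  (X : 'M[R]_(n, N)) (e : 'rV[R]_N) : 'M[R]_n :=
  \matrix_(i, j) eta e (br (row i X) (row j X)).

(* Orthogonal decompositions v = v_1 + ... + v_k are given by their orthogonal
   projections P_j (symmetric idempotents, mutually orthogonal, summing to 1).
   Operators act on row vectors, so J_eta^2 P_j is the matrix P_j *m J^2. *)
Definition assumptionA (N n : nat) (br : 'rV[R]_N -> 'rV[R]_N -> 'rV[R]_N)
  (X : 'M[R]_(n, N)) :=
  exists (k : nat) (r : 'I_k -> nat) (P : 'I_k -> 'M[R]_n),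
  [/\ (forall j, (0 < r j)%N),
      (forall j, P j *m P j = P j /\ (P j)^T = P j),
      (forall i j, i != j -> P i *m P j = 0),
      \sum_j P j = 1%:M &
      (forall e, nonzero_on_center br e -> forall j,
         let J := Jmx br X e in
         [/\ J *m P j = P j *m J,
             \rank (P j *m (J *m J)) = (2 * r j)%N &
             exists mu : R, [/\ mu != 0, eigenvalue (P j *m (J *m J)) mu &
               forall nu : R, nu != 0 -> eigenvalue (P j *m (J *m J)) nu ->
                 nu = mu]])].

(* Complexification g_C = g ⊕ i g, as a real Lie algebra on R^(N+N):
   x = row_mx x_R x_I stands for x_R + i x_I. *)
Definition cbr (N : nat) (br : 'rV[R]_N -> 'rV[R]_N -> 'rV[R]_N)
  (x y : 'rV[R]_(N + N)) : 'rV[R]_(N + N) :=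
  row_mx (br (lsubmx x) (lsubmx y) - br (rsubmx x) (rsubmx y))
         (br (lsubmx x) (rsubmx y) + br (rsubmx x) (lsubmx y)).

(* v_C = v ⊕ i v with the induced real inner product: orthonormal basis
   X_1..X_n, iX_1..iX_n. *)
Definition cX (N n : nat) (X : 'M[R]_(n, N)) : 'M[R]_(n + n, N + N) :=
  block_mx X 0 0 X.

End Defs.

(* Main.v *)
Require Import Defs.
From HB Require Import structures.
From mathcomp Require Import all_boot all_order all_algebra.
From mathcomp Require Import reals.
From mathcomp Require Import ring lra.
From Stdlib Require Import Classical.
Set Implicit Arguments. Unset Strict Implicit. Unset Printing Implicit Defensive.
Import Order.TTheory GRing.Theory Num.Theory.
Local Open Scope ring_scope.

Lemma tr_idem (F : fieldType) m (M : 'M[F]_m) : M *m M = M -> \tr M = (\rank M)%:R.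
Proof.
move=> MM.
have CD := mulmx_base M.
have [C' HC] := row_fullP (col_base_full M).
have [D' HD] := row_freeP (row_base_free M).
move: (col_base M) (row_base M) CD HC HD => C D CD HC HD.
have DC : D *m C = 1%:M.
  have -> : D *m C = C' *m ((C *m D) *m (C *m D)) *m D'.
    by rewrite !mulmxA HC mul1mx -!mulmxA HD mulmx1.
  rewrite CD MM.
  have -> : C' *m M *m D' = C' *m (C *m D) *m D' by rewrite CD.
  by rewrite !mulmxA HC mul1mx HD.
have -> : \tr M = \tr (C *m D) by rewrite CD.
by rewrite mxtrace_mulC DC mxtrace1.
Qed.

Lemma skew_ent (F : numFieldType) r (S : 'M[F]_r) : S^T = -S -> forall i j, S j i = - S i j.
Proof. by move=> HS i j; have := congr1 (fun M : 'M[F]_r => M i j) HS; rewrite !mxE. Qed.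

Lemma skew_diag (F : numFieldType) r (S : 'M[F]_r) : S^T = -S -> forall i, S i i = 0.
Proof.
move=> HS i; have := skew_ent HS i i => /eqP; rewrite -addr_eq0 -mulr2n -mulr_natr.
by rewrite mulf_eq0 pnatr_eq0 orbF => /eqP.
Qed.

Lemma skew2 (F : numFieldType) r (S T : 'M[F]_r) : (r <= 2)%N ->
  S^T = -S -> T^T = -T -> S *m T *m S = (\tr (S *m T) / 2) *: S.
Proof.
case: r S T => [|[|[|r]]] // S T _ HS HT; apply/matrixP => i j.
- by case: i.
- have Hs := skew_diag HS; have Ht := skew_diag HT.
  by rewrite !ord1 !mxE big_ord1 !Hs !mulr0.
have Hs := skew_diag HS; have Ht := skew_diag HT.
have Es := skew_ent HS; have Et := skew_ent HT.
rewrite !mxE /mxtrace !big_ord_recl !big_ord0 ?mxE ?big_ord_recl ?big_ord0 ?mxE.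
set o1 := lift ord0 ord0.
have Hi : forall k : 'I_2, k = ord0 \/ k = o1.
  case=> [[|[|k]] Hk]; [left|right|by []]; exact: val_inj.
rewrite !Hs !Ht (Es ord0 o1) (Et ord0 o1).
have n2 : (2 : F) != 0 by rewrite pnatr_eq0.
by case: (Hi i) => ->; case: (Hi j) => ->; rewrite ?Hs ?(Es ord0 o1); field.
Qed.

Lemma idJ (F : numFieldType) n (J : 'M[F]_n) : J^T = -J -> (\rank J <= 2)%N ->
  forall A : 'M_n, A^T = -A -> J *m A *m J = (\tr (J *m A) / 2) *: J.
Proof.
move=> HJ Hr A HA.
have H1 : J *m pinvmx (row_base J) *m row_base J = J.
  by apply: mulmxKpV; rewrite eq_row_base submx_refl.
move: (\rank J) Hr (row_base J) (pinvmx (row_base J)) H1 => r Hr B Rm H1.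
have H2 : J = B^T *m Rm^T *m J.
  have := congr1 (@trmx _ n n) H1; rewrite !trmx_mul HJ !mulmxN => /eqP.
  by rewrite eqr_opp mulmxA => /eqP E; rewrite E.
set S := Rm^T *m J *m Rm.
have HS : J = B^T *m S *m B.
  rewrite [RHS](_ : _ = B^T *m Rm^T *m (J *m Rm *m B)); first by rewrite H1 -H2.
  by rewrite /S !mulmxA.
have SS : S^T = -S by rewrite /S !trmx_mul trmxK HJ ?mulmxN ?mulNmx ?mulmxN !mulmxA.
have TT : (B *m A *m B^T)^T = - (B *m A *m B^T).
  by rewrite !trmx_mul trmxK HA ?mulmxN ?mulNmx ?mulmxN !mulmxA.
have E := skew2 Hr SS TT.
have -> : J *m A *m J = B^T *m (S *m (B *m A *m B^T) *m S) *m B.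
  by rewrite {1}HS {1}HS !mulmxA.
have -> : \tr (J *m A) = \tr (S *m (B *m A *m B^T)).
  by rewrite {1}HS -!mulmxA mxtrace_mulC !mulmxA.
by rewrite E -scalemxAr -scalemxAl -HS.
Qed.

Lemma core_eig (F : numFieldType) n (M : 'M[F]_n) (c : F) (k : nat) :
  (0 < k)%N -> c != 0 -> M *m M = c *: M -> \tr M = c * k%:R ->
  \rank M = k /\ exists mu : F, [/\ mu != 0, eigenvalue M mu &
     forall nu : F, nu != 0 -> eigenvalue M nu -> nu = mu].
Proof.
move=> k0 c0 MM trM; split.
  have I : (c^-1 *: M) *m (c^-1 *: M) = c^-1 *: M.
    by rewrite -scalemxAl -scalemxAr MM !scalerA mulrC mulrA mulfV // mul1r.
  have := tr_idem I; rewrite mxrank_scale_nz ?invr_eq0 // mxtraceZ trM mulrA mulVf // mul1r.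
  by move/eqP; rewrite eqr_nat => /eqP.
exists c; split => //.
  apply/eigenvalueP.
  case: (pickP (fun i => row i M != 0)) => [i Hi | H0].
    by exists (row i M) => //; rewrite -row_mul MM; apply/rowP => j; rewrite !mxE.
  have M0 : M = 0.
    apply/row_matrixP => i; have := H0 i; move/negbFE/eqP; rewrite row0 //.
  by move: trM; rewrite M0 mxtrace0 => /esym/eqP; rewrite mulf_eq0 (negbTE c0) pnatr_eq0; case: k k0.
move=> nu nu0 /eigenvalueP [v Hv v0].
have : (nu * nu) *: v = (c * nu) *: v.
  by rewrite -scalerA -Hv scalemxAl -Hv -mulmxA MM -scalemxAr Hv scalerA.
move/eqP; rewrite -subr_eq0 -scalerBl scaler_eq0 (negbTE v0) orbF.
by rewrite -mulrBl mulf_eq0 subr_eq0 (negbTE nu0) orbF => /eqP.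
Qed.

Definition IdJ (F : numFieldType) n (J : 'M[F]_n) :=
  forall A : 'M_n, A^T = -A -> J *m A *m J = (\tr (J *m A) / 2) *: J.

Lemma cube_block (F : realFieldType) n (J1 J2 : 'M[F]_n) :
  J1^T = -J1 -> J2^T = -J2 -> IdJ J1 -> IdJ J2 -> IdJ (J1 + J2) ->
  let K := block_mx J1 J2 J2 (-J1) in
  K *m K *m K = ((\tr (J1 *m J1) + \tr (J2 *m J2)) / 2) *: K.
Proof.
move=> S1 S2 I1 I2 I12 K.
have H111 := I1 _ S1; have H121 := I1 _ S2; have H212 := I2 _ S1; have H222 := I2 _ S2.
have P1 := I12 _ S1; have P2 := I12 _ S2.
rewrite ?mulmxDl ?mulmxDr in P1 P2.
rewrite H111 H212 in P1; rewrite H121 H222 in P2.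
rewrite /K !mulmx_block.
rewrite ?mulmxDl ?mulmxDr ?mulmxN ?mulNmx ?opprK H111 H222 H121 H212 scale_block_mx.
rewrite !mxtraceD (mxtrace_mulC J2 J1) in P1 P2 *.
move: P1 P2.
move: (\tr (J1 *m J1)) (\tr (J2 *m J2)) (\tr (J1 *m J2)) => a b d.
move: (J1 *m J1 *m J2) (J2 *m J1 *m J1) (J1 *m J2 *m J2) (J2 *m J2 *m J1) => X1 X2 Y1 Y2 P1 P2.
have n2 : (2 : F) != 0 by rewrite pnatr_eq0.
congr block_mx; apply/matrixP => i j; move/matrixP/(_ i j): P1; move/matrixP/(_ i j): P2;
  rewrite !mxE => P2 P1; lra.
Qed.

Notation BR R N := ('rV[R]_N -> 'rV[R]_N -> 'rV[R]_N).

Lemma br0l (R : realType) N (br : BR R N) : two_step_bracket br -> forall w, br 0 w = 0.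
Proof.
case=> L _ _ _ _ w; have := L 1 0 0 w; rewrite !scale1r addr0 => /eqP.
by rewrite eq_sym -subr_eq0 addrK => /eqP.
Qed.

Lemma br0r (R : realType) N (br : BR R N) : two_step_bracket br -> forall w, br w 0 = 0.
Proof.
case=> _ L _ _ _ w; have := L 1 0 0 w; rewrite !scale1r addr0 => /eqP.
by rewrite eq_sym -subr_eq0 addrK => /eqP.
Qed.

Lemma brDl (R : realType) N (br : BR R N) : two_step_bracket br -> forall x y w, br (x + y) w = br x w + br y w.
Proof. by case=> L _ _ _ _ x y w; have := L 1 x y w; rewrite !scale1r. Qed.

Lemma brDr (R : realType) N (br : BR R N) : two_step_bracket br -> forall x y w, br w (x + y) = br w x + br w y.
Proof. by case=> _ L _ _ _ x y w; have := L 1 x y w; rewrite !scale1r. Qed.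

Lemma brZl (R : realType) N (br : BR R N) : two_step_bracket br -> forall a x w, br (a *: x) w = a *: br x w.
Proof. move=> Hb a x w; case: (Hb) => L _ _ _ _; by rewrite -[a *: x]addr0 L (br0l Hb) addr0. Qed.

Lemma brZr (R : realType) N (br : BR R N) : two_step_bracket br -> forall a x w, br w (a *: x) = a *: br w x.
Proof. move=> Hb a x w; case: (Hb) => _ L _ _ _; by rewrite -[a *: x]addr0 L (br0r Hb) addr0. Qed.

Lemma brA (R : realType) N (br : BR R N) : two_step_bracket br -> forall x y, br y x = - br x y.
Proof.
move=> Hb x y; case: (Hb) => _ _ Z _ _; have := Z (x + y).
rewrite (brDl Hb) !(brDr Hb) !Z add0r addr0 => /eqP; rewrite addr_eq0 => /eqP ->; by rewrite opprK.
Qed.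

Lemma brN (R : realType) N (br : BR R N) : two_step_bracket br -> forall x w, br (- x) w = - br x w.
Proof. by move=> Hb x w; rewrite -scaleN1r (brZl Hb) scaleN1r. Qed.

Lemma central_r (R : realType) N (br : BR R N) : two_step_bracket br -> forall y, central br y -> forall w, br w y = 0.
Proof. by move=> Hb y Hy w; rewrite (brA Hb) Hy oppr0. Qed.

Lemma central_br (R : realType) N (br : BR R N) : two_step_bracket br -> forall x y, central br (br x y).
Proof. by case=> _ _ _ C _ x y w; apply: C. Qed.

Lemma br_suml (R : realType) N (br : BR R N) : two_step_bracket br -> forall I (r : seq I) (P : pred I) (f : I -> 'rV_N) w,
  br (\sum_(i <- r | P i) f i) w = \sum_(i <- r | P i) br (f i) w.
Proof. by move=> Hb I r P f w; apply: (big_morph (fun x => br x w)); [move=> x y; exact: brDl | exact: br0l]. Qed.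

Lemma br_sumr (R : realType) N (br : BR R N) : two_step_bracket br -> forall I (r : seq I) (P : pred I) (f : I -> 'rV_N) w,
  br w (\sum_(i <- r | P i) f i) = \sum_(i <- r | P i) br w (f i).
Proof. by move=> Hb I r P f w; apply: (big_morph (fun x => br w x)); [move=> x y; exact: brDr | exact: br0r]. Qed.

Lemma etaD (R : realType) N (e x y : 'rV[R]_N) : Defs.eta e (x + y) = Defs.eta e x + Defs.eta e y.
Proof. by rewrite /Defs.eta mulmxDl mxE. Qed.
Lemma etaZ (R : realType) N (e x : 'rV[R]_N) a : Defs.eta e (a *: x) = a * Defs.eta e x.
Proof. by rewrite /Defs.eta -scalemxAl mxE. Qed.
Lemma etaN (R : realType) N (e x : 'rV[R]_N) : Defs.eta e (- x) = - Defs.eta e x.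
Proof. by rewrite /Defs.eta mulNmx mxE. Qed.
Lemma eta0 (R : realType) N (e : 'rV[R]_N) : Defs.eta e 0 = 0.
Proof. by rewrite /Defs.eta mul0mx mxE. Qed.
Lemma eta_sum (R : realType) N (e : 'rV[R]_N) I (r : seq I) (P : pred I) (f : I -> 'rV_N) :
  Defs.eta e (\sum_(i <- r | P i) f i) = \sum_(i <- r | P i) Defs.eta e (f i).
Proof. by apply: (big_morph (Defs.eta e)); [move=> x y; exact: etaD | exact: eta0]. Qed.
Lemma eta_adde (R : realType) N (e1 e2 x : 'rV[R]_N) : Defs.eta (e1 + e2) x = Defs.eta e1 x + Defs.eta e2 x.
Proof. by rewrite /Defs.eta linearD /= mulmxDr mxE. Qed.

Lemma Jskew (R : realType) N n (br : BR R N) (X : 'M[R]_(n, N)) e :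
  two_step_bracket br -> (Jmx br X e)^T = - Jmx br X e.
Proof. by move=> Hb; apply/matrixP => i j; rewrite !mxE (brA Hb) etaN. Qed.

Lemma Jadd (R : realType) N n (br : BR R N) (X : 'M[R]_(n, N)) e1 e2 :
  Jmx br X (e1 + e2) = Jmx br X e1 + Jmx br X e2.
Proof. by apply/matrixP => i j; rewrite !mxE eta_adde. Qed.

Lemma J0 (R : realType) N n (br : BR R N) (X : 'M[R]_(n, N)) e :
  two_step_bracket br -> ~ nonzero_on_center br e -> Jmx br X e = 0.
Proof.
move=> Hb He; apply/matrixP => i j; rewrite !mxE.
case: (eqVneq (Defs.eta e (br (row i X) (row j X))) 0) => // H.
by case: He; exists (br (row i X) (row j X)); split => //; apply: central_br.
Qed.

Lemma Jtransfer (R : realType) N n m (br : BR R N) (X : 'M[R]_(n, N)) (Y : 'M[R]_(m, N))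
  (A0 : 'M[R]_(m, n)) e : two_step_bracket br ->
  (forall i, central br (row i Y - row i A0 *m X)) ->
  Jmx br Y e = A0 *m Jmx br X e *m A0^T.
Proof.
move=> Hb HY; apply/matrixP => i j; rewrite mxE.
have [zi Hzi ->] : exists2 z, central br z & row i Y = z + row i A0 *m X.
  by exists (row i Y - row i A0 *m X); rewrite ?subrK.
have [zj Hzj ->] : exists2 z, central br z & row j Y = z + row j A0 *m X.
  by exists (row j Y - row j A0 *m X); rewrite ?subrK.
rewrite (brDl Hb) !(brDr Hb) !Hzi (central_r Hb Hzj) !add0r.
rewrite !mulmx_sum_row (br_suml Hb) eta_sum.
under eq_bigr do rewrite (brZl Hb) (br_sumr Hb) etaZ eta_sum.
rewrite !mxE.
apply: etrans (_ : _ = \sum_k \sum_l A0 i k * A0 j l * Defs.eta e (br (row k X) (row l X))) _.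
  apply: eq_bigr => k _; rewrite mxE mulr_sumr; apply: eq_bigr => l _.
  by rewrite (brZr Hb) etaZ !mxE; ring.
rewrite exchange_big /=; apply: eq_bigr => l _.
rewrite !mxE mulr_suml; apply: eq_bigr => k _.
by rewrite !mxE; ring.
Qed.

Lemma coords (R : realType) N n m (br : BR R N) (X : 'M[R]_(n, N)) (Y : 'M[R]_(m, N)) :
  complement br X -> exists A0 : 'M[R]_(m, n), forall i, central br (row i Y - row i A0 *m X).
Proof.
case=> _ H2.
have : forall i : 'I_m, exists a : 'rV_n, central br (row i Y - a *m X) by move=> i; exact: H2.
move/fin_all_exists => [f Hf]; exists (\matrix_i f i) => i; by rewrite rowK.
Qed.

Lemma Jrank (R : realType) N n m (br : BR R N) (X : 'M[R]_(n, N)) (Y : 'M[R]_(m, N)) e :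
  two_step_bracket br -> complement br X ->
  (forall e : 'rV_N, nonzero_on_center br e -> \rank (Jmx br X e) = 2%N) ->
  complement br Y ->
  (\rank (Jmx br Y e) <= 2)%N /\ (nonzero_on_center br e -> Jmx br Y e != 0).
Proof.
move=> Hb HX Hr HY.
have [A0 HA] := coords Y HX; have [B0 HB] := coords X HY.
have E1 := Jtransfer e Hb HA; have E2 := Jtransfer e Hb HB.
split.
  rewrite E1; apply: leq_trans (mxrankM_maxl _ _) _; apply: leq_trans (mxrankM_maxr _ _) _.
  case: (classic (nonzero_on_center br e)) => He; first by rewrite Hr.
  by rewrite (J0 _ Hb He) mxrank0.
move=> He; apply/eqP => Y0; have := Hr _ He; by rewrite E2 Y0 mulmx0 mul0mx mxrank0.
Qed.

Lemma sqsum0 (F : realFieldType) n (J : 'M[F]_n) :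
  (0 <= \sum_i \sum_j J i j ^+ 2) /\ (\sum_i \sum_j J i j ^+ 2 = 0 -> J = 0).
Proof.
split; first by apply: sumr_ge0 => i _; apply: sumr_ge0 => j _; exact: sqr_ge0.
move=> /eqP; rewrite psumr_eq0; last by move=> i _; apply: sumr_ge0 => j _; exact: sqr_ge0.
move=> /allP H; apply/matrixP => i j; rewrite mxE.
have := H i (mem_index_enum i); rewrite psumr_eq0; last by move=> k _; exact: sqr_ge0.
by move=> /allP /(_ j (mem_index_enum j)); rewrite sqrf_eq0 => /eqP.
Qed.

Lemma trsq (F : realFieldType) n (J : 'M[F]_n) : J^T = -J ->
  \tr (J *m J) = - \sum_i \sum_j J i j ^+ 2.
Proof.
move=> S; rewrite /mxtrace -sumrN; apply: eq_bigr => i _; rewrite mxE -sumrN.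
apply: eq_bigr => j _; rewrite (skew_ent S j i); ring.
Qed.

Lemma assumA_gen (R : realType) N n (br : BR R N) (X : 'M[R]_(n, N)) (k : nat) :
  (0 < k)%N ->
  (forall e, nonzero_on_center br e -> exists c : R,
     let J := Jmx br X e in
     [/\ c != 0, (J *m J) *m (J *m J) = c *: (J *m J) & \tr (J *m J) = c * (2 * k)%:R]) ->
  assumptionA br X.
Proof.
move=> k0 H; exists 1%N, (fun _ => k), (fun _ => 1%:M); split.
- by [].
- by move=> j; rewrite mulmx1 trmx1.
- by move=> i j; rewrite !ord1 eqxx.
- by rewrite big_ord1.
move=> e He j /=.
have k2 : (0 < 2 * k)%N by rewrite muln_gt0 k0.
have [c [c0 E T]] := H e He.
have [Hr [mu Hmu]] := core_eig k2 c0 E T.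
split; first by rewrite mulmx1 mul1mx.
  by rewrite mul1mx.
by exists mu; rewrite mul1mx.
Qed.

Lemma real_part (R : realType) N n m (br : BR R N) (X : 'M[R]_(n, N)) (Y : 'M[R]_(m, N)) :
  two_step_bracket br -> complement br X ->
  (forall e : 'rV_N, nonzero_on_center br e -> \rank (Jmx br X e) = 2%N) ->
  complement br Y -> assumptionA br Y.
Proof.
move=> Hb HX Hr HY; apply: (assumA_gen (k := 1%N)) => // e He.
have S := Jskew Y e Hb; have [r2 nz] := Jrank e Hb HX Hr HY.
have I := idJ S r2; move: S r2 nz I (nz He); set J := Jmx br Y e => S r2 nz I J0.
exists (\tr (J *m J) / 2); split.
- rewrite mulf_eq0 invr_eq0 pnatr_eq0 orbF trsq // oppr_eq0.
  apply/negP => /eqP H; have [_ H0] := sqsum0 J; by rewrite (H0 H) eqxx in J0.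
- by rewrite !mulmxA (I J S) -scalemxAl.
- have n2 : (2 : R) != 0 by rewrite pnatr_eq0.
  by rewrite muln1; field.
Qed.

Lemma eta_row (R : realType) N (e : 'rV[R]_(N + N)) (u v : 'rV[R]_N) :
  Defs.eta e (row_mx u v) = Defs.eta (lsubmx e) u + Defs.eta (rsubmx e) v.
Proof. by rewrite /Defs.eta -{1}(hsubmxK e) tr_row_mx mul_row_col mxE. Qed.

Lemma central_c (R : realType) N (br : BR R N) (y : 'rV[R]_(N + N)) :
  two_step_bracket br ->
  central (cbr br) y <-> central br (lsubmx y) /\ central br (rsubmx y).
Proof.
move=> Hb; split.
  move=> Hy; split => w; have := Hy (row_mx w 0);
  rewrite /cbr row_mxKl row_mxKr !(br0r Hb) subr0 add0r -row_mx0 => /eq_row_mx [] //.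
case=> H1 H2 w; rewrite /cbr !H1 !H2 subr0 add0r; exact: row_mx0.
Qed.

Lemma mul_cX (R : realType) N n (X : 'M[R]_(n, N)) (a : 'rV[R]_(n + n)) :
  a *m cX X = row_mx (lsubmx a *m X) (rsubmx a *m X).
Proof. by rewrite -{1}(hsubmxK a) /cX mul_row_block !mulmx0 addr0 add0r. Qed.

Lemma complement_c (R : realType) N n (br : BR R N) (X : 'M[R]_(n, N)) :
  two_step_bracket br -> complement br X -> complement (cbr br) (cX X).
Proof.
move=> Hb [H1 H2]; split.
  move=> a; rewrite mul_cX => /(central_c _ Hb); rewrite row_mxKl row_mxKr.
  case=> /H1 A1 /H1 A2; by rewrite -(hsubmxK a) A1 A2 row_mx0.
move=> w; have [a1 Ha1] := H2 (lsubmx w); have [a2 Ha2] := H2 (rsubmx w).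
exists (row_mx a1 a2); apply/(central_c _ Hb).
rewrite mul_cX row_mxKl row_mxKr -{1 2}(hsubmxK w) opp_row_mx add_row_mx row_mxKl row_mxKr.
by split.
Qed.

Lemma Jc_block (R : realType) N n (br : BR R N) (X : 'M[R]_(n, N)) e :
  two_step_bracket br ->
  Jmx (cbr br) (cX X) e =
  block_mx (Jmx br X (lsubmx e)) (Jmx br X (rsubmx e))
           (Jmx br X (rsubmx e)) (- Jmx br X (lsubmx e)).
Proof.
move=> Hb; rewrite -[LHS]submxK; congr block_mx; apply/matrixP => i j;
  rewrite !mxE /cX /block_mx ?rowKu ?rowKd !row_row_mx !row0 /cbr !row_mxKl !row_mxKr
    ?(br0l Hb) ?(br0r Hb) ?subr0 ?addr0 ?add0r ?sub0r eta_row ?eta0 ?addr0 ?add0r ?etaN //.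
Qed.

Lemma nz_split (R : realType) N (br : BR R N) (e : 'rV[R]_(N + N)) :
  two_step_bracket br -> nonzero_on_center (cbr br) e ->
  nonzero_on_center br (lsubmx e) \/ nonzero_on_center br (rsubmx e).
Proof.
move=> Hb [y [/(central_c _ Hb) [C1 C2]]]; rewrite -(hsubmxK y) eta_row.
case: (eqVneq (Defs.eta (lsubmx e) (lsubmx y)) 0) => [-> | H].
  by rewrite add0r => H; right; exists (rsubmx y).
by move=> _; left; exists (lsubmx y).
Qed.

Lemma complex_part (R : realType) N n (br : BR R N) (X : 'M[R]_(n, N)) :
  two_step_bracket br -> complement br X ->
  (forall e : 'rV_N, nonzero_on_center br e -> \rank (Jmx br X e) = 2%N) ->
  assumptionA (cbr br) (cX X).
Proof.
move=> Hb HX Hr; apply: (assumA_gen (k := 2%N)) => // e He.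
rewrite Jc_block //.
have Id : forall e', IdJ (Jmx br X e').
  move=> e'; have [r2 _] := Jrank e' Hb HX Hr HX; exact: idJ (Jskew X e' Hb) r2.
have I12 := Id (lsubmx e + rsubmx e); rewrite Jadd in I12.
have nz : Jmx br X (lsubmx e) != 0 \/ Jmx br X (rsubmx e) != 0.
  case: (nz_split Hb He) => H; [left | right].
    by have [_ nz] := Jrank (lsubmx e) Hb HX Hr HX; exact: nz.
  by have [_ nz] := Jrank (rsubmx e) Hb HX Hr HX; exact: nz.
move: (Jskew X (lsubmx e) Hb) (Jskew X (rsubmx e) Hb) (Id (lsubmx e)) (Id (rsubmx e)) I12 nz.
move: (Jmx br X (lsubmx e)) (Jmx br X (rsubmx e)) => J1 J2 S1 S2 I1 I2 I12 nz.
have C := cube_block S1 S2 I1 I2 I12.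
exists ((\tr (J1 *m J1) + \tr (J2 *m J2)) / 2); split.
- rewrite mulf_eq0 invr_eq0 pnatr_eq0 orbF !trsq // -opprD oppr_eq0.
  have [p1 z1] := sqsum0 J1; have [p2 z2] := sqsum0 J2.
  rewrite paddr_eq0 //; apply/negP => /andP [/eqP /z1 E1 /eqP /z2 E2].
  by case: nz; rewrite ?E1 ?E2 eqxx.
- by rewrite !mulmxA C -scalemxAl.
- have n2 : (2 : R) != 0 by rewrite pnatr_eq0.
  rewrite mulmx_block mxtrace_block !mxtraceD mulNmx mulmxN opprK.
  by rewrite (_ : (2 * 2)%:R = 4 :> R) //; field.
Qed.

Theorem proposition6p1 (R : realType) (N n : nat)
  (br : 'rV[R]_N -> 'rV[R]_N -> 'rV[R]_N) (X : 'M[R]_(n, N)) :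
  two_step_bracket br ->
  complement br X ->
  (forall e : 'rV[R]_N, nonzero_on_center br e -> \rank (Jmx br X e) = 2%N) ->
  [/\ assumptionA br X,
      (forall (n' : nat) (X' : 'M[R]_(n', N)),
          complement br X' -> assumptionA br X') &
      complement (cbr br) (cX X) /\ assumptionA (cbr br) (cX X)].
Proof.
move=> Hb HX Hr; split.
- exact: (real_part Hb HX Hr HX).
- move=> n' X' HX'; exact: (real_part Hb HX Hr HX').
- split; [exact: complement_c | exact: complex_part].
Qed.
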